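(* Let $b$ be a solution of length $L > 11$. Then $b$ is extendable and $b$ is not particular; that is, $b(b(0)) = 1$, $b(i) = 0$ for all $i$ with $b(0) < i < L$, and $b(b(0) - 1) = 0$.
   Context: A solution of length $L \ge 1$ is a sequence $(b(0), \dots, b(L-1))$ of integers with $0 \le b(i) < L$ such that for every $0 \le i < L$, $b(i) = |\{ j : 0 \le j < L,\ b(j) = i\}|$. A solution $b$ of length $L$ is extendable if $b(b(0)) = 1$ and $b(i) = 0$ for all $i$ with $b(0) < i < L$. It is particular if it is extendable and $b(b(0) - 1) > 0$. *)

(* Defs.v *)
From mathcomp Require Import all_boot.

(* A sequence b(0..L-1) is represented by b : nat -> nat; only values at
   indices < L matter. *)
Definition solution (L : nat) (b : nat -> nat) : Prop :=
  1 <= L /\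
  forall i, i < L -> b i < L /\ b i = count (fun j => b j == i) (iota 0 L).

Definition extendable (L : nat) (b : nat -> nat) : Prop :=
  solution L b /\ b (b 0) = 1 /\ (forall i, b 0 < i < L -> b i = 0).

Definition particular (L : nat) (b : nat -> nat) : Prop :=
  extendable L b /\ 0 < b (b 0 - 1).

(* Main.v *)
Require Import Defs.
From mathcomp Require Import all_boot zify.
Set Warnings "-notation-overridden".
Lemma cnt (a : pred nat) s : count a s = \sum_(i <- s) a i.
Proof. by elim: s => [|x s IH]; rewrite ?big_nil ?big_cons //= IH. Qed.

Lemma L1 n (x : nat) : \sum_(0 <= i < n) (x == i : nat) = (x < n).
Proof.
elim: n => [|n IH]; first by rewrite big_geq.
rewrite big_nat_recr //= IH.
case: (ltngtP x n) => [h|h|->]; rewrite ?eqxx; lia.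
Qed.

Lemma L2 n (x : nat) : \sum_(0 <= i < n) i * (x == i) = x * (x < n).
Proof.
elim: n => [|n IH]; first by rewrite big_geq // muln0.
rewrite big_nat_recr //= IH.
case: (ltngtP x n) => [h|h|->]; rewrite ?eqxx; lia.
Qed.

Lemma two_le (F : nat -> nat) m n k1 k2 : m <= k1 < n -> m <= k2 < n -> k1 != k2 ->
  F k1 + F k2 <= \sum_(m <= i < n) F i.
Proof.
move=> h1 h2 ne.
have u : uniq (index_iota m n) by rewrite /index_iota iota_uniq.
have i1 : k1 \in index_iota m n by rewrite mem_index_iota.
have i2 : k2 \in index_iota m n by rewrite mem_index_iota.
rewrite (bigD1_seq k1) //= -big_filter (bigD1_seq k2) ?filter_uniq //=; last by rewrite mem_filter eq_sym ne.
by rewrite addnA leq_addr.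
Qed.

Lemma one_le (F : nat -> nat) m n k1 : m <= k1 < n ->
  F k1 <= \sum_(m <= i < n) F i.
Proof.
move=> h1.
have u : uniq (index_iota m n) by rewrite /index_iota iota_uniq.
have i1 : k1 \in index_iota m n by rewrite mem_index_iota.
by rewrite (bigD1_seq k1) //= leq_addr.
Qed.

Lemma split01 (F : nat -> nat) L : 1 < L ->
  \sum_(0 <= i < L) F i = F 0 + F 1 + \sum_(2 <= i < L) F i.
Proof. by move=> h; rewrite big_ltn ?(big_ltn (m:=1)) ?addnA //; apply: ltn_trans h. Qed.

Lemma sum_ones L : \sum_(0 <= j < L) 1 = L.
Proof. by rewrite sum1_size size_iota subn0. Qed.

Theorem mainTheorem7 (L : nat) (b : nat -> nat) :
  11 < L -> solution L b ->
  extendable L b /\ ~ particular L b.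
Proof.
move=> hL sol; have [L1p H] := sol.
have Hb i : i < L -> b i = \sum_(0 <= j < L) (b j == i : nat).
  by move=> hi; rewrite (H i hi).2 cnt /index_iota subn0.
have Sb : \sum_(0 <= i < L) b i = L.
  rewrite (eq_big_nat _ _ (fun i hi => Hb i (proj2 (andP hi)))).
  rewrite (exchange_big_nat _ 0 L 0 L xpredT xpredT (fun i j => (b j == i : nat))).
  rewrite -[RHS](sum_ones L); apply: eq_big_nat => j hj.
  by rewrite L1 (H j (proj2 (andP hj))).1.
have Sib : \sum_(0 <= i < L) i * b i = L.
  rewrite (eq_big_nat _ _ (fun i hi => congr1 (muln i) (Hb i (proj2 (andP hi))))).
  under eq_big_nat => i _ do rewrite big_distrr /=.
  rewrite (exchange_big_nat _ 0 L 0 L xpredT xpredT (fun i j => i * (b j == i : nat))).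
  rewrite -[RHS]Sb; apply: eq_big_nat => j hj.
  by rewrite L2 (H j (proj2 (andP hj))).1 muln1.
set S := \sum_(2 <= i < L) (i - 1) * b i.
have eS : b 0 = S.
  have e2 : \sum_(2 <= i < L) i * b i = S + \sum_(2 <= i < L) b i.
    rewrite /S -big_split /=; apply: eq_big_nat => i hi.
    case: i hi => [|i] hi //; rewrite mulSn subSS subn0; lia.
  move: Sb Sib; rewrite !split01 //; try lia.
set z := b 0 in eS *.
have zL : z < L by exact: (H 0 (ltn_trans (isT : 0 < 11) hL)).1.
have z0 : 0 < z.
  case: (posnP z) => // e.
  have := one_le (fun j => (b j == 0 : nat)) 0 L 0.
  rewrite -Hb; last lia.
  rewrite /z in e; rewrite e eqxx; lia.
have bz : 0 < b z.
  have := one_le (fun j => (b j == z : nat)) 0 L 0.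
  rewrite -Hb // eqxx; lia.
have Dk k : 2 <= k < L -> k != z -> k != 2 -> b k = 0.
  move=> hk kz k2.
  case: (posnP (b k)) => // bk.
  have h1 : k - 1 <= (k - 1) * b k by rewrite leq_pmulr.
  have h2 : z - 1 <= (z - 1) * b z by rewrite leq_pmulr.
  case: (ltnP z 2) => hz.
  - have := one_le (fun i => (i - 1) * b i) 2 L k hk.
    rewrite -/S -eS /=; lia.
  - have := two_le (fun i => (i - 1) * b i) 2 L k z hk _ kz.
    rewrite -/S -eS /=; move=> /(_ ltac:(lia)); lia.
have bz1 : 3 <= z -> b z <= 1.
  move=> hz; case: (leqP (b z) 1) => // bz2.
  have h2 : (z - 1) * 2 <= (z - 1) * b z by rewrite leq_mul2l bz2 orbT.
  have := one_le (fun i => (i - 1) * b i) 2 L z.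
  rewrite -/S -eS /=; move=> /(_ ltac:(lia)); lia.
have cnt0 : z = \sum_(0 <= j < L) (b j == 0 : nat) by rewrite /z {1}Hb //; lia.
have cntn : \sum_(0 <= j < L) (b j != 0 : nat) <= 4.
  apply: (@leq_trans (\sum_(0 <= j < L) ((j == 0 : nat) + (j == 1 : nat) + (j == 2 : nat) + (j == z : nat)))).
    rewrite big_nat_cond [X in _ <= X]big_nat_cond; apply: leq_sum => j /andP[/andP[_ hj] _].
    case: (eqVneq (b j) 0) => [_|bj] //=.
    case: (eqVneq j 0) => [_|] //= j0.
    case: (eqVneq j 1) => [_|] //= j1.
    case: (eqVneq j 2) => [_|] //= j2.
    case: (eqVneq j z) => [_|] //= jz.
    by move: bj; rewrite Dk //; lia.
  have L1' c : \sum_(0 <= j < L) (j == c : nat) = (c < L).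
    by rewrite -L1; apply: eq_big_nat => i _; rewrite eq_sym.
  rewrite !big_split /= !L1'; lia.
have tot : \sum_(0 <= j < L) (b j == 0 : nat) + \sum_(0 <= j < L) (b j != 0 : nat) = L.
  rewrite -big_split /= -[RHS](sum_ones L); apply: eq_big_nat => j _.
  by case: (b j == 0).
have z8 : 8 <= z by lia.
have bz_1 : b z = 1 by have := bz1 ltac:(lia); lia.
have ext : extendable L b.
  split; first exact: sol.
  split; first exact: bz_1.
  move=> i /andP[zi iL]; apply: Dk; lia.
split => // -[_ hp].
move: hp; rewrite -/z Dk //; lia.
Qed.
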